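(* Let $N\ge1$ and $K(x,y)=2\sum_{j=0}^{N-1}\sin\left(\frac{2j+1}{2}x\right)\sin\left(\frac{2j+1}{2}y\right)$. For $a,b,c,d\in\mathbb{Z}$ define $\Pi(a)=\frac1\pi\int_0^\pi K(x,x)\cos(ax)\,\mathrm{d}x$, $\Pi(a,b)=\frac1{\pi^2}\int_0^\pi\int_0^\pi K(x,y)^2\cos(ax)\cos(by)\,\mathrm{d}x\,\mathrm{d}y$, $\Pi(a,b,c)=\frac1{\pi^3}\int_{[0,\pi]^3}K(x,y)K(y,z)K(z,x)\cos(ax)\cos(by)\cos(cz)\,\mathrm{d}x\,\mathrm{d}y\,\mathrm{d}z$, $\Pi(a,b,c,d)=\frac1{\pi^4}\int_{[0,\pi]^4}K(x,y)K(y,z)K(z,w)K(w,x)\cos(ax)\cos(by)\cos(cz)\cos(dw)\,\mathrm{d}x\,\mathrm{d}y\,\mathrm{d}z\,\mathrm{d}w$, and let $\varepsilon(a)=\mathbb{1}_{\{1\le a\le 2N-1,\ a\text{ odd}\}}$, $\alpha(a,b,c)=(\min\{a,N\}+\min\{b,N\}-c)^+$ where $x^+=\max\{x,0\}$. Then $\Pi(0)=\Pi(0,0)=N$, and for all integers $k,\ell\ge1$: $\Pi(k)=-\frac{\varepsilon(k)}2$; $\Pi(k,\ell)=\frac{(2N-k)^+}{4}$ if $k=\ell$ and $\Pi(k,\ell)=-\frac{\varepsilon(k+\ell)}{2}$ if $k\ne\ell$; $\Pi(0,k)=-\frac{\varepsilon(k)}{2}$; $\Pi(k,\ell,\ell)=\frac{(2N-k)^+}{8}$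 if $k=2\ell$ and $\Pi(k,\ell,\ell)=-\frac{3\varepsilon(k+2\ell)+\varepsilon(k)\varepsilon(|2\ell-k|)}{8}$ if $k\ne 2\ell$; $\Pi(k,\ell,k+\ell)=\frac{(N-k-\ell)^+}{4}+\frac{\alpha(k+\ell,\ell,k+\ell)+\alpha(k+\ell,k,k+\ell)}{8}$; $\Pi(0,k,k)=\frac{(2N-k)^+}{4}$ and $\Pi(k,k,k,k)=\frac{(N-k)^+}{4}+\frac{(2N-k)^+}{16}$; and if $k\ne\ell$, $\Pi(k,k,\ell,\ell)=\frac{(N-\max\{k,\ell\})^++(N-k-\ell)^+}{8}+\frac{\alpha(\min\{k,\ell\},\max\{k,\ell\},\max\{k,\ell\})}{16}+\frac{\alpha(k+\ell,\ell,k+\ell)+\alpha(k+\ell,k,k+\ell)+\alpha(\ell,\ell-k,\ell)+\alpha(k,k-\ell,k)}{16}$, $\Pi(k,\ell,k,\ell)=\frac{(N-k-\ell)^+}{4}+\frac{\alpha(k+\ell,\min\{k,\ell\},k+\ell)}{4}+\frac{\alpha(k,k,k+\ell)+\alpha(\ell,\ell,k+\ell)}{8}$.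
   Context: $\mathbb{1}_{\{\cdot\}}$ denotes the indicator function. *)

(* Defs.v *)
From Stdlib Require Import Reals ZArith.
From Coquelicot Require Import Coquelicot.
Open Scope R_scope.

Definition Kn (N : nat) (x y : R) : R :=
  2 * sum_n (fun j => sin ((2 * INR j + 1) / 2 * x) * sin ((2 * INR j + 1) / 2 * y)) (N - 1)%nat.
(* note: sum_n f m = f 0 + ... + f m, so (N-1) gives the N terms j = 0..N-1 for N >= 1 *)

Definition Pi1 (N : nat) (a : Z) : R :=
  / PI * RInt (fun x => Kn N x x * cos (IZR a * x)) 0 PI.

Definition Pi2 (N : nat) (a b : Z) : R :=
  / PI ^ 2 * RInt (fun x => RInt (fun y =>
      (Kn N x y) ^ 2 * cos (IZR a * x) * cos (IZR b * y)) 0 PI) 0 PI.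

Definition Pi3 (N : nat) (a b c : Z) : R :=
  / PI ^ 3 * RInt (fun x => RInt (fun y => RInt (fun z =>
      Kn N x y * Kn N y z * Kn N z x
      * cos (IZR a * x) * cos (IZR b * y) * cos (IZR c * z)) 0 PI) 0 PI) 0 PI.

Definition Pi4 (N : nat) (a b c d : Z) : R :=
  / PI ^ 4 * RInt (fun x => RInt (fun y => RInt (fun z => RInt (fun w =>
      Kn N x y * Kn N y z * Kn N z w * Kn N w x
      * cos (IZR a * x) * cos (IZR b * y) * cos (IZR c * z) * cos (IZR d * w))
      0 PI) 0 PI) 0 PI) 0 PI.

Definition zpos (x : Z) : Z := Z.max x 0.

Definition eps (N : nat) (a : Z) : R :=
  if ((1 <=? a)%Z && (a <=? 2 * Z.of_nat N - 1)%Z && Z.odd a)%bool then 1 else 0.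

Definition alpha (N : nat) (a b c : Z) : Z :=
  zpos (Z.min a (Z.of_nat N) + Z.min b (Z.of_nat N) - c).

(* Main.v *)
Require Import Defs.
From Stdlib Require Import Reals ZArith Lia Lra List Bool.
From Coquelicot Require Import Coquelicot.
Import ListNotations.
Open Scope R_scope.

Fixpoint sumz (lo : Z) (n : nat) (f : Z -> R) : R :=
  match n with O => 0 | S n' => f lo + sumz (lo + 1)%Z n' f end.

Lemma sumz_ext lo n f g : (forall z, (lo <= z < lo + Z.of_nat n)%Z -> f z = g z) ->
  sumz lo n f = sumz lo n g.
Proof.
  revert lo; induction n as [|n IH]; intros lo H; simpl; auto.
  rewrite H by lia. f_equal. apply IH. intros z Hz; apply H; lia.
Qed.

Lemma sumz_plus lo n f g : sumz lo n (fun z => f z + g z) = sumz lo n f + sumz lo n g.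
Proof. revert lo; induction n as [|n IH]; intros lo; simpl; [ring|rewrite IH; ring]. Qed.

Lemma sumz_minus lo n f g : sumz lo n (fun z => f z - g z) = sumz lo n f - sumz lo n g.
Proof. revert lo; induction n as [|n IH]; intros lo; simpl; [ring|rewrite IH; ring]. Qed.

Lemma sumz_scal lo n c f : sumz lo n (fun z => c * f z) = c * sumz lo n f.
Proof. revert lo; induction n as [|n IH]; intros lo; simpl; [ring|rewrite IH; ring]. Qed.

Lemma sumz_scal_r lo n c f : sumz lo n (fun z => f z * c) = sumz lo n f * c.
Proof. revert lo; induction n as [|n IH]; intros lo; simpl; [ring|rewrite IH; ring]. Qed.

Lemma sumz_zero lo n : sumz lo n (fun _ => 0) = 0.
Proof. revert lo; induction n as [|n IH]; intros lo; simpl; [ring|rewrite IH; ring]. Qed.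

Lemma sumz_swap lo n lo' n' (f : Z -> Z -> R) :
  sumz lo n (fun i => sumz lo' n' (fun j => f i j)) = sumz lo' n' (fun j => sumz lo n (fun i => f i j)).
Proof.
  revert lo; induction n as [|n IH]; intros lo; simpl.
  - rewrite sumz_zero; auto.
  - rewrite IH. rewrite <- sumz_plus. auto.
Qed.

Lemma sumz_mult lo n lo' n' f g :
  sumz lo n f * sumz lo' n' g = sumz lo n (fun i => sumz lo' n' (fun j => f i * g j)).
Proof.
  rewrite <- sumz_scal_r. apply sumz_ext; intros. rewrite <- sumz_scal. auto.
Qed.

Lemma sumz_S lo n f : sumz lo (S n) f = f lo + sumz (lo+1)%Z n f.
Proof. reflexivity. Qed.

Lemma sumz_Sr lo n f : sumz lo (S n) f = sumz lo n f + f (lo + Z.of_nat n)%Z.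
Proof.
  revert lo; induction n as [|n IH]; intros lo.
  - simpl. replace (lo+0)%Z with lo by lia. ring.
  - rewrite sumz_S, IH, sumz_S. replace (lo + 1 + Z.of_nat n)%Z with (lo + Z.of_nat (S n))%Z by lia. ring.
Qed.

Lemma sumz_split lo n m f : sumz lo (n + m) f = sumz lo n f + sumz (lo + Z.of_nat n)%Z m f.
Proof.
  revert lo; induction n as [|n IH]; intros lo.
  - simpl. replace (lo+0)%Z with lo by lia. ring.
  - rewrite Nat.add_succ_l, !sumz_S, IH. replace (lo + 1 + Z.of_nat n)%Z with (lo + Z.of_nat (S n))%Z by lia. ring.
Qed.

Lemma sumz_rev lo lo' n f : sumz lo n f = sumz lo' n (fun z => f (lo + lo' + Z.of_nat n - 1 - z)%Z).
Proof.
  revert lo lo'; induction n as [|n IH]; intros lo lo'; auto.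
  rewrite sumz_S, sumz_Sr, (IH (lo+1)%Z lo').
  replace (lo + lo' + Z.of_nat (S n) - 1 - (lo' + Z.of_nat n))%Z with lo by lia.
  rewrite Rplus_comm. f_equal. apply sumz_ext; intros; f_equal; lia.
Qed.

Definition iR (f : R -> R) (a b v : R) : Prop := @is_RInt R_NormedModule f a b v.

Lemma iR_ext f g a b v : (forall x, f x = g x) -> iR f a b v -> iR g a b v.
Proof. unfold iR; intros H; apply is_RInt_ext; intros; auto. Qed.
Lemma iR_val f a b v w : v = w -> iR f a b v -> iR f a b w.
Proof. intros ->; auto. Qed.
Lemma iR_plus f g a b u v : iR f a b u -> iR g a b v -> iR (fun x => f x + g x) a b (u + v).
Proof. unfold iR; intros H1 H2; exact (is_RInt_plus _ _ _ _ _ _ H1 H2). Qed.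
Lemma iR_minus f g a b u v : iR f a b u -> iR g a b v -> iR (fun x => f x - g x) a b (u - v).
Proof. unfold iR; intros H1 H2; exact (is_RInt_minus _ _ _ _ _ _ H1 H2). Qed.
Lemma iR_scal f a b c u : iR f a b u -> iR (fun x => c * f x) a b (c * u).
Proof. unfold iR; intros H1; exact (is_RInt_scal _ _ _ c _ H1). Qed.
Lemma iR_zero a b : iR (fun _ => 0) a b 0.
Proof. apply (iR_val _ _ _ (scal (b - a) 0)). unfold scal; simpl; unfold mult; simpl; ring. unfold iR; apply (@is_RInt_const R_NormedModule). Qed.

Lemma iR_sumz lo n (f : Z -> R -> R) v a b :
  (forall i, iR (f i) a b (v i)) -> iR (fun x => sumz lo n (fun i => f i x)) a b (sumz lo n v).
Proof.
  intros H; revert lo; induction n as [|n IH]; intros lo; simpl.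
  - apply iR_zero.
  - apply iR_plus; auto.
Qed.

Definition phi (u : Z) (x : R) := sin ((IZR u + /2) * x).
Definition e (z : Z) : R := if Z.eq_dec z 0 then 1 else 0.
Definition m (c u v : Z) : R :=
  /4 * (e (u - v + c) + e (u - v - c) - e (u + v + 1 + c) - e (u + v + 1 - c)).

Lemma iR_cos (n : Z) : iR (fun x => cos (IZR n * x)) 0 PI (PI * e n).
Proof.
  unfold e; destruct (Z.eq_dec n 0) as [->|Hn].
  - apply (iR_ext (fun _ => 1)). intros x; rewrite Rmult_0_l, cos_0; auto.
    apply (iR_val _ _ _ (scal (PI - 0) 1)). unfold scal; simpl; unfold mult; simpl; ring.
    unfold iR; apply (@is_RInt_const R_NormedModule).
  - assert (Hn' : IZR n <> 0) by (apply not_0_IZR; auto).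
    apply (iR_val _ _ _ (minus ((fun x => sin (IZR n * x) / IZR n) PI) ((fun x => sin (IZR n * x) / IZR n) 0))).
    + unfold minus, plus, opp; simpl. rewrite Rmult_0_r, sin_0.
      rewrite (sin_eq_0_1 (IZR n * PI)) by (exists n; auto). field; auto.
    + unfold iR; apply (@is_RInt_derive R_CompleteNormedModule (fun x => sin (IZR n * x) / IZR n)).
      * intros x _. auto_derive; auto. field; auto.
      * intros x _. apply (@ex_derive_continuous R_AbsRing R_NormedModule). auto_derive; auto.
Qed.

Lemma prod_trig A B C :
  sin A * sin B * cos C = /4 * (cos (A - B + C) + cos (A - B - C) - cos (A + B + C) - cos (A + B - C)).
Proof.
  rewrite !cos_plus, !cos_minus, !sin_minus, !cos_plus, !sin_plus. field.
Qed.

Lemma iR_piece c u v : iR (fun x => phi u x * phi v x * cos (IZR c * x)) 0 PI (PI * m c u v).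
Proof.
  apply (iR_ext (fun x => /4 * (cos (IZR (u - v + c) * x) + cos (IZR (u - v - c) * x)
     - cos (IZR (u + v + 1 + c) * x) - cos (IZR (u + v + 1 - c) * x)))).
  { intros x. unfold phi. rewrite prod_trig.
    set (A := (IZR u + /2) * x). set (B := (IZR v + /2) * x).
    replace (IZR (u - v + c) * x) with (A - B + IZR c * x) by (unfold A, B; rewrite plus_IZR, minus_IZR; ring).
    replace (IZR (u - v - c) * x) with (A - B - IZR c * x) by (unfold A, B; rewrite !minus_IZR; ring).
    replace (IZR (u + v + 1 + c) * x) with (A + B + IZR c * x) by (unfold A, B; rewrite !plus_IZR; field).
    replace (IZR (u + v + 1 - c) * x) with (A + B - IZR c * x) by (unfold A, B; rewrite minus_IZR, !plus_IZR; field).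
    reflexivity. }
  apply (iR_val _ _ _ (/4 * (PI * e (u - v + c) + PI * e (u - v - c) - PI * e (u + v + 1 + c) - PI * e (u + v + 1 - c)))).
  { unfold m; field. }
  apply iR_scal. apply iR_minus; [apply iR_minus; [apply iR_plus|]|]; apply iR_cos.
Qed.


Definition SR (N : nat) (f : Z -> R) : R := sumz (- Z.of_nat N)%Z (2 * N) f.
Definition KK N x y := SR N (fun u => phi u x * phi u y).
Definition ker N (B : Z -> Z -> R) x y := SR N (fun u => SR N (fun v => B u v * (phi u x * phi v y))).

Lemma kerA N d z x : iR (fun w => KK N z w * KK N w x * cos (IZR d * w)) 0 PI (PI * ker N (m d) z x).
Proof.
  apply (iR_ext (fun w => SR N (fun p => SR N (fun q => (phi p z * phi q x) * (phi p w * phi q w * cos (IZR d * w)))))).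
  { intros w. symmetry. unfold KK, SR. rewrite sumz_mult, <- sumz_scal_r. apply sumz_ext; intros p _.
    rewrite <- sumz_scal_r. apply sumz_ext; intros q _. ring. }
  apply (iR_val _ _ _ (SR N (fun p => SR N (fun q => (phi p z * phi q x) * (PI * m d p q))))).
  { unfold ker, SR. rewrite <- sumz_scal. apply sumz_ext; intros. rewrite <- sumz_scal. apply sumz_ext; intros. ring. }
  apply iR_sumz; intros p. apply iR_sumz; intros q. apply iR_scal. apply iR_piece.
Qed.

Lemma kerB N B c y x : iR (fun z => KK N y z * ker N B z x * cos (IZR c * z)) 0 PI
  (PI * ker N (fun v q => SR N (fun p => m c v p * B p q)) y x).
Proof.
  apply (iR_ext (fun z => SR N (fun v => SR N (fun p => SR N (fun q =>
     (phi v y * B p q * phi q x) * (phi v z * phi p z * cos (IZR c * z))))))).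
  { intros z. symmetry. unfold KK, ker, SR. rewrite sumz_mult, <- sumz_scal_r. apply sumz_ext; intros v _.
    rewrite <- sumz_scal_r. apply sumz_ext; intros p _.
    rewrite <- sumz_scal, <- sumz_scal_r. apply sumz_ext; intros q _. ring. }
  apply (iR_val _ _ _ (SR N (fun v => SR N (fun p => SR N (fun q =>
     (phi v y * B p q * phi q x) * (PI * m c v p)))))).
  { unfold ker, SR. rewrite <- sumz_scal. apply sumz_ext; intros v _. rewrite sumz_swap.
    rewrite <- sumz_scal. apply sumz_ext; intros q _. rewrite <- sumz_scal_r, <- sumz_scal.
    apply sumz_ext; intros. ring. }
  apply iR_sumz; intros v. apply iR_sumz; intros p. apply iR_sumz; intros q. apply iR_scal. apply iR_piece.
Qed.

Lemma kerC N B a : iR (fun x => ker N B x x * cos (IZR a * x)) 0 PI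
  (PI * SR N (fun u => SR N (fun v => B u v * m a u v))).
Proof.
  apply (iR_ext (fun x => SR N (fun u => SR N (fun v => B u v * (phi u x * phi v x * cos (IZR a * x)))))).
  { intros x. symmetry. unfold ker, SR. rewrite <- sumz_scal_r. apply sumz_ext; intros u _.
    rewrite <- sumz_scal_r. apply sumz_ext; intros v _. ring. }
  apply (iR_val _ _ _ (SR N (fun u => SR N (fun v => B u v * (PI * m a u v))))).
  { unfold SR. rewrite <- sumz_scal. apply sumz_ext; intros. rewrite <- sumz_scal. apply sumz_ext; intros. ring. }
  apply iR_sumz; intros u. apply iR_sumz; intros v. apply iR_scal. apply iR_piece.
Qed.

Lemma kerD N a : iR (fun x => KK N x x * cos (IZR a * x)) 0 PI (PI * SR N (fun u => m a u u)).
Proof.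
  apply (iR_ext (fun x => SR N (fun u => phi u x * phi u x * cos (IZR a * x)))).
  { intros x. symmetry. unfold KK, SR. rewrite <- sumz_scal_r. auto. }
  apply (iR_val _ _ _ (SR N (fun u => PI * m a u u))).
  { unfold SR. rewrite <- sumz_scal. auto. }
  apply iR_sumz; intros u. apply iR_piece.
Qed.

Lemma sum_n_sumz (g : nat -> R) M : sum_n g M = sumz 0 (S M) (fun z => g (Z.to_nat z)).
Proof.
  induction M as [|M IH].
  - rewrite sum_O. simpl. ring.
  - rewrite sum_Sn, sumz_Sr, IH. unfold plus; simpl. f_equal. f_equal. lia.
Qed.

Lemma phi_refl z x : phi (-1 - z) x = - phi z x.
Proof.
  unfold phi. rewrite <- sin_neg. f_equal. rewrite minus_IZR. field.
Qed.

Lemma Kn_KK N x y : (1 <= N)%nat -> Kn N x y = KK N x y.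
Proof.
  intros HN. unfold Kn, KK, SR.
  rewrite sum_n_sumz. replace (S (N - 1)) with N by lia.
  replace (2 * N)%nat with (N + N)%nat by lia. rewrite sumz_split.
  replace (- Z.of_nat N + Z.of_nat N)%Z with 0%Z by lia. rewrite (sumz_rev (- Z.of_nat N) 0%Z).
  replace (2 * sumz 0 N _) with (sumz 0 N (fun z => phi z x * phi z y) + sumz 0 N (fun z => phi z x * phi z y)).
  - f_equal. apply sumz_ext; intros z Hz.
    replace (- Z.of_nat N + 0 + Z.of_nat N - 1 - z)%Z with (-1 - z)%Z by lia.
    rewrite !phi_refl; ring.
  - replace (sumz 0 N (fun z : Z => sin ((2 * INR (Z.to_nat z) + 1) / 2 * x) * sin ((2 * INR (Z.to_nat z) + 1) / 2 * y)))
     with (sumz 0 N (fun z => phi z x * phi z y)). ring.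
    apply sumz_ext; intros z Hz. unfold phi.
    rewrite INR_IZR_INZ, Z2Nat.id by lia. f_equal; f_equal; field.
Qed.


Lemma RInt_iR (f : R -> R) a b (v : R) : iR f a b v -> @RInt R_CompleteNormedModule f a b = v :> R.
Proof. intros H; apply is_RInt_unique; exact H. Qed.

Lemma RInt_ext' (f g : R -> R) a b : (forall x : R, f x = g x :> R) -> @RInt R_CompleteNormedModule f a b = RInt g a b.
Proof. intros H; apply RInt_ext; intros; auto. Qed.

Lemma KK_sym N x y : KK N x y = KK N y x.
Proof. unfold KK. apply sumz_ext; intros; ring. Qed.

Lemma PI_nz : PI <> 0.
Proof. apply PI_neq0. Qed.

Lemma Pi1_eq N a : (1 <= N)%nat -> Pi1 N a = SR N (fun u => m a u u).
Proof.
  intros HN. unfold Pi1.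
  rewrite (RInt_ext' _ (fun x => KK N x x * cos (IZR a * x))) by (intros; rewrite Kn_KK; auto).
  rewrite (RInt_iR _ _ _ _ (kerD N a)). field. apply PI_nz.
Qed.

Lemma Pi2_eq N a b : (1 <= N)%nat -> Pi2 N a b = SR N (fun u => SR N (fun v => m b u v * m a u v)).
Proof.
  intros HN. unfold Pi2.
  rewrite (RInt_ext' _ (fun x => PI * (ker N (m b) x x * cos (IZR a * x)))).
  2:{ intros x.
      rewrite (RInt_ext' _ (fun y => cos (IZR a * x) * (KK N x y * KK N y x * cos (IZR b * y)))).
      2:{ intros y. rewrite !Kn_KK by auto. rewrite (KK_sym N y x). ring. }
      rewrite (RInt_iR _ _ _ _ (iR_scal _ _ _ _ _ (kerA N b x x))). ring. }
  rewrite (RInt_iR _ _ _ _ (iR_scal _ _ _ _ _ (kerC N (m b) a))).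
  field. apply PI_nz.
Qed.

Lemma Pi3_eq N a b c : (1 <= N)%nat -> Pi3 N a b c =
  SR N (fun u => SR N (fun v => SR N (fun p => m b u p * m c p v) * m a u v)).
Proof.
  intros HN. unfold Pi3.
  rewrite (RInt_ext' _ (fun x => PI * PI * (ker N (fun v q => SR N (fun p => m b v p * m c p q)) x x * cos (IZR a * x)))).
  2:{ intros x.
      rewrite (RInt_ext' _ (fun y => PI * cos (IZR a * x) * (KK N x y * ker N (m c) y x * cos (IZR b * y)))).
      2:{ intros y.
          rewrite (RInt_ext' _ (fun z => Kn N x y * cos (IZR a * x) * cos (IZR b * y) * (KK N y z * KK N z x * cos (IZR c * z)))).
          2:{ intros z. rewrite !Kn_KK by auto. ring. }
          rewrite (RInt_iR _ _ _ _ (iR_scal _ _ _ _ _ (kerA N c y x))). rewrite Kn_KK by auto. ring. }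
      rewrite (RInt_iR _ _ _ _ (iR_scal _ _ _ _ _ (kerB N (m c) b x x))). ring. }
  rewrite (RInt_iR _ _ _ _ (iR_scal _ _ _ _ _ (kerC N _ a))).
  field. apply PI_nz.
Qed.

Lemma Pi4_eq N a b c d : (1 <= N)%nat -> Pi4 N a b c d =
  SR N (fun u => SR N (fun v => SR N (fun p => m b u p * SR N (fun r => m c p r * m d r v)) * m a u v)).
Proof.
  intros HN. unfold Pi4.
  rewrite (RInt_ext' _ (fun x => PI * PI * PI * (ker N (fun v q => SR N (fun p => m b v p * SR N (fun r => m c p r * m d r q))) x x * cos (IZR a * x)))).
  2:{ intros x.
      rewrite (RInt_ext' _ (fun y => PI * PI * cos (IZR a * x) * (KK N x y * ker N (fun v q => SR N (fun p => m c v p * m d p q)) y x * cos (IZR b * y)))).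
      2:{ intros y.
          rewrite (RInt_ext' _ (fun z => PI * Kn N x y * cos (IZR a * x) * cos (IZR b * y) * (KK N y z * ker N (m d) z x * cos (IZR c * z)))).
          2:{ intros z.
              rewrite (RInt_ext' _ (fun w => Kn N x y * Kn N y z * cos (IZR a * x) * cos (IZR b * y) * cos (IZR c * z) * (KK N z w * KK N w x * cos (IZR d * w)))).
              2:{ intros w. rewrite !Kn_KK by auto. ring. }
              rewrite (RInt_iR _ _ _ _ (iR_scal _ _ _ _ _ (kerA N d z x))). rewrite !Kn_KK by auto. ring. }
          rewrite (RInt_iR _ _ _ _ (iR_scal _ _ _ _ _ (kerB N (m d) c y x))). rewrite Kn_KK by auto. ring. }
      rewrite (RInt_iR _ _ _ _ (iR_scal _ _ _ _ _ (kerB N _ b x x))). cbv beta. ring. }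
  rewrite (RInt_iR _ _ _ _ (iR_scal _ _ _ _ _ (kerC N _ a))).
  field. apply PI_nz.
Qed.


Definition inR (N : nat) (z : Z) : bool := ((- Z.of_nat N <=? z) && (z <? Z.of_nat N))%Z.
Definition ind (b : bool) : R := if b then 1 else 0.
Definition Ac (N : nat) (c : Z) (g : Z -> R) (v : Z) : R :=
  /2 * (ind (inR N (v + c)) * g (v + c)%Z + ind (inR N (v + - c)) * g (v + - c)%Z).
Definition antisym (g : Z -> R) := forall p, g (-1 - p)%Z = - g p.

Ltac bdestr := repeat match goal with
  | |- context [Z.leb ?x ?y] => destruct (Z.leb_spec x y)
  | |- context [Z.ltb ?x ?y] => destruct (Z.ltb_spec x y)
  | |- context [Z.eqb ?x ?y] => destruct (Z.eqb_spec x y)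
  end; simpl; try lia; try reflexivity.

Lemma e_eq z w : (z = w \/ z = - w)%Z -> e z = e w.
Proof. intros H; unfold e; destruct (Z.eq_dec z 0), (Z.eq_dec w 0); auto; lia. Qed.

Lemma ind_and a b : ind (a && b) = ind a * ind b.
Proof. destruct a, b; simpl; ring. Qed.

Lemma sumz_delta lo n t g : sumz lo n (fun p => e (p - t) * g p) =
  ind ((lo <=? t) && (t <? lo + Z.of_nat n))%Z * g t.
Proof.
  revert lo; induction n as [|n IH]; intros lo.
  - simpl. unfold ind. bdestr; ring.
  - rewrite sumz_S, IH. unfold e at 1. destruct (Z.eq_dec (lo - t) 0).
    + replace t with lo by lia. unfold ind. bdestr. ring.
    + unfold ind. bdestr; ring.
Qed.

Lemma SR_delta N t g : SR N (fun p => e (p - t) * g p) = ind (inR N t) * g t.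
Proof.
  unfold SR. rewrite sumz_delta. unfold inR, ind. bdestr.
Qed.

Lemma inR_refl N z : inR N (-1 - z) = inR N z.
Proof. unfold inR. bdestr. Qed.

Lemma Ac_lemma N c g v : antisym g -> SR N (fun p => m c v p * g p) = Ac N c g v.
Proof.
  intros Hg.
  transitivity (/4 * (SR N (fun p => e (p - (v + c)) * g p) + SR N (fun p => e (p - (v + - c)) * g p)
     - SR N (fun p => e (p - (-1 - (v + c))) * g p) - SR N (fun p => e (p - (-1 - (v + - c))) * g p))).
  { unfold SR. rewrite <- !sumz_plus, <- !sumz_minus, <- sumz_scal. apply sumz_ext; intros p _.
    unfold m. rewrite (e_eq (v - p + c) (p - (v + c))) by lia.
    rewrite (e_eq (v - p - c) (p - (v + - c))) by lia.
    rewrite (e_eq (v + p + 1 + c) (p - (-1 - (v + c)))) by lia.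
    rewrite (e_eq (v + p + 1 - c) (p - (-1 - (v + - c)))) by lia. ring. }
  rewrite !SR_delta, !inR_refl, !Hg. unfold Ac. field.
Qed.

Lemma Ac_antisym N c g : antisym g -> antisym (Ac N c g).
Proof.
  intros Hg p. unfold Ac.
  replace (-1 - p + c)%Z with (-1 - (p + - c))%Z by lia.
  replace (-1 - p + - c)%Z with (-1 - (p + c))%Z by lia.
  rewrite !inR_refl, !Hg. ring.
Qed.

Lemma m_sym c u v : m c u v = m c v u.
Proof.
  unfold m.
  rewrite (e_eq (u - v + c) (v - u - c)) by lia.
  rewrite (e_eq (u - v - c) (v - u + c)) by lia.
  rewrite (e_eq (u + v + 1 + c) (v + u + 1 + c)) by lia.
  rewrite (e_eq (u + v + 1 - c) (v + u + 1 - c)) by lia. ring.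
Qed.

Lemma m_antisym d q : antisym (fun r => m d r q).
Proof.
  intros r. unfold m.
  rewrite (e_eq (-1 - r - q + d) (r + q + 1 - d)) by lia.
  rewrite (e_eq (-1 - r - q - d) (r + q + 1 + d)) by lia.
  rewrite (e_eq (-1 - r + q + 1 + d) (r - q - d)) by lia.
  rewrite (e_eq (-1 - r + q + 1 - d) (r - q + d)) by lia. ring.
Qed.

Definition Chain (N : nat) (fs : list Z) (g : Z -> R) : Z -> R := fold_right (Ac N) g fs.
Definition PiC (N : nat) (fs : list Z) (d : Z) : R := SR N (fun v => Chain N fs (fun r => m d r v) v).

Lemma Chain_antisym N fs g : antisym g -> antisym (Chain N fs g).
Proof. intros Hg; induction fs; simpl; auto. apply Ac_antisym; auto. Qed.

Lemma SR_swap N f : SR N (fun u => SR N (fun v => f u v)) = SR N (fun v => SR N (fun u => f u v)).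
Proof. apply sumz_swap. Qed.

Lemma SR_ext N f g : (forall z, f z = g z) -> SR N f = SR N g.
Proof. intros H; apply sumz_ext; auto. Qed.

Lemma Pi1_C N a : SR N (fun u => m a u u) = PiC N nil a.
Proof. reflexivity. Qed.

Lemma Pi2_C N a b : SR N (fun u => SR N (fun v => m b u v * m a u v)) = PiC N (a :: nil) b.
Proof.
  unfold PiC; simpl. rewrite SR_swap. apply SR_ext; intros v.
  rewrite <- Ac_lemma by apply m_antisym. apply SR_ext; intros u. rewrite (m_sym a u v). ring.
Qed.

Lemma Pi3_C N a b c : SR N (fun u => SR N (fun v => SR N (fun p => m b u p * m c p v) * m a u v)) = PiC N (a :: b :: nil) c.
Proof.
  unfold PiC; simpl. rewrite SR_swap. apply SR_ext; intros v.
  rewrite <- Ac_lemma by (apply Ac_antisym, m_antisym). apply SR_ext; intros u. rewrite (m_sym a u v).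
  rewrite <- Ac_lemma by apply m_antisym. ring.
Qed.

Lemma Pi4_C N a b c d : SR N (fun u => SR N (fun v => SR N (fun p => m b u p * SR N (fun r => m c p r * m d r v)) * m a u v)) = PiC N (a :: b :: c :: nil) d.
Proof.
  unfold PiC; simpl. rewrite SR_swap. apply SR_ext; intros v.
  rewrite <- Ac_lemma by (apply Ac_antisym, Ac_antisym, m_antisym). apply SR_ext; intros u. rewrite (m_sym a u v).
  rewrite Rmult_comm. f_equal.
  rewrite <- Ac_lemma by (apply Ac_antisym, m_antisym).
  apply SR_ext; intros p. rewrite <- Ac_lemma by apply m_antisym. auto.
Qed.


Definition sg (b : bool) (a : Z) : Z := if b then a else (- a)%Z.
Fixpoint signs (k : nat) : list (list bool) :=
  match k with O => [nil] | S k => map (cons true) (signs k) ++ map (cons false) (signs k) end.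
Fixpoint pathok (N : nat) (q : Z) (fs : list Z) (s : list bool) : bool :=
  match fs, s with
  | a :: fs', b :: s' => inR N (q + sg b a) && pathok N (q + sg b a)%Z fs' s'
  | _, _ => true end.
Fixpoint tot (fs : list Z) (s : list bool) : Z :=
  match fs, s with a :: fs', b :: s' => (sg b a + tot fs' s')%Z | _, _ => 0%Z end.
Fixpoint minP (fs : list Z) (s : list bool) : Z :=
  match fs, s with a :: fs', b :: s' => Z.min 0 (sg b a + minP fs' s') | _, _ => 0%Z end.
Fixpoint maxP (fs : list Z) (s : list bool) : Z :=
  match fs, s with a :: fs', b :: s' => Z.max 0 (sg b a + maxP fs' s') | _, _ => 0%Z end.
Definition lsum (l : list R) : R := fold_right Rplus 0 l.
Definition zsum (l : list Z) : Z := fold_right Z.add 0%Z l.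

Lemma lsum_app l1 l2 : lsum (l1 ++ l2) = lsum l1 + lsum l2.
Proof. induction l1; simpl; [ring| rewrite IHl1; ring]. Qed.
Lemma lsum_map_scal {A} c (f : A -> R) l : lsum (map (fun x => c * f x) l) = c * lsum (map f l).
Proof. induction l; simpl; [ring| rewrite IHl; ring]. Qed.
Lemma lsum_map_ext {A} (f g : A -> R) l : (forall x, f x = g x) -> lsum (map f l) = lsum (map g l).
Proof. intros H; induction l; simpl; auto. rewrite IHl, H; auto. Qed.
Lemma lsum_IZR {A} (f : A -> Z) l : lsum (map (fun x => IZR (f x)) l) = IZR (zsum (map f l)).
Proof. induction l; simpl; auto. rewrite IHl, plus_IZR; auto. Qed.
Lemma SR_lsum {A} N (F : A -> Z -> R) l : SR N (fun q => lsum (map (fun s => F s q) l)) = lsum (map (fun s => SR N (F s)) l).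
Proof.
  induction l; simpl.
  - unfold SR; apply sumz_zero.
  - unfold SR in *. rewrite sumz_plus, IHl. auto.
Qed.

Lemma Chain_cons N a fs g : Chain N (a :: fs) g = Ac N a (Chain N fs g).
Proof. reflexivity. Qed.
Lemma signs_S k : signs (S k) = map (cons true) (signs k) ++ map (cons false) (signs k).
Proof. reflexivity. Qed.

Lemma chain_exp N fs g q : Chain N fs g q =
  (/2) ^ (length fs) * lsum (map (fun s => ind (pathok N q fs s) * g (q + tot fs s)%Z) (signs (length fs))).
Proof.
  revert q; induction fs as [|a fs IH]; intros q.
  - simpl. rewrite Z.add_0_r. ring.
  - rewrite Chain_cons. unfold Ac. rewrite !IH. simpl length. rewrite signs_S, map_app, lsum_app, !map_map.
    rewrite (lsum_map_ext (fun x => ind (pathok N q (a :: fs) (true :: x)) * g (q + tot (a :: fs) (true :: x))%Z) (fun s => ind (inR N (q + a)) * (ind (pathok N (q + a) fs s) * g ((q + a) + tot fs s)%Z))).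
    2:{ intros s; cbn [pathok tot sg]. rewrite ind_and, Z.add_assoc. ring. }
    rewrite (lsum_map_ext (fun x => ind (pathok N q (a :: fs) (false :: x)) * g (q + tot (a :: fs) (false :: x))%Z)
       (fun s => ind (inR N (q + - a)) * (ind (pathok N (q + - a) fs s) * g ((q + - a) + tot fs s)%Z))).
    2:{ intros s; cbn [pathok tot sg]. rewrite ind_and, Z.add_assoc. ring. }
    rewrite !lsum_map_scal. simpl pow. ring.
Qed.

Definition ez (z : Z) : Z := if (z =? 0)%Z then 1%Z else 0%Z.
Lemma e_IZR z : e z = IZR (ez z).
Proof. unfold e, ez. destruct (Z.eq_dec z 0); bdestr. Qed.

Definition lo (N : nat) fs s := (- Z.of_nat N - minP fs s)%Z.
Definition hi (N : nat) fs s := (Z.of_nat N - maxP fs s)%Z.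
Definition cntZ (N : nat) fs s : Z := Z.max 0 (2 * Z.of_nat N - maxP fs s + minP fs s).
Definition DZ (N : nat) fs s (S : Z) : Z :=
  if Z.odd S then (if ((lo N fs s <=? - ((S + 1) / 2)) && (- ((S + 1) / 2) <? hi N fs s))%Z then 1%Z else 0%Z) else 0%Z.
Definition Cz (N : nat) fs d s : Z :=
  ((ez (tot fs s + d) + ez (tot fs s - d)) * cntZ N fs s - DZ N fs s (tot fs s + d) - DZ N fs s (tot fs s - d))%Z.

Lemma minP_le fs s : (minP fs s <= 0)%Z.
Proof. revert s; induction fs; destruct s; simpl; lia. Qed.
Lemma maxP_ge fs s : (0 <= maxP fs s)%Z.
Proof. revert s; induction fs; destruct s; simpl; lia. Qed.

Lemma pathok_bounds N fs s q : inR N q && pathok N q fs s = ((lo N fs s <=? q) && (q <? hi N fs s))%Z.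
Proof.
  unfold lo, hi. revert s q; induction fs as [|a fs IH]; intros s q; destruct s as [|b s]; cbn [pathok minP maxP];
   try (unfold inR; bdestr; fail).
  rewrite IH. unfold inR. bdestr.
Qed.

Lemma count_lemma l n a b : sumz l n (fun q => ind ((a <=? q) && (q <? b))%Z) =
  IZR (Z.max 0 (Z.min b (l + Z.of_nat n) - Z.max a l)).
Proof.
  revert l; induction n as [|n IH]; intros l.
  - simpl. f_equal. lia.
  - rewrite sumz_S, IH. unfold ind. destruct ((a <=? l) && (l <? b))%Z eqn:E.
    + rewrite <- (plus_IZR 1). f_equal. apply andb_prop in E. destruct E as [E1 E2].
      apply Z.leb_le in E1. apply Z.ltb_lt in E2. lia.
    + rewrite Rplus_0_l. f_equal. apply andb_false_iff in E. destruct E as [E|E];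
      [apply Z.leb_gt in E | apply Z.ltb_ge in E]; lia.
Qed.

Lemma cnt_eval N fs s : SR N (fun q => ind (pathok N q fs s)) = IZR (cntZ N fs s).
Proof.
  unfold SR. rewrite (sumz_ext _ _ _ (fun q => ind ((lo N fs s <=? q) && (q <? hi N fs s))%Z)).
  - rewrite count_lemma. f_equal. unfold cntZ, lo, hi. pose proof (minP_le fs s). pose proof (maxP_ge fs s). lia.
  - intros z Hz. rewrite <- pathok_bounds. replace (inR N z) with true; auto.
    unfold inR. bdestr.
Qed.

Lemma e_eq2 z w : (z = 2 * w)%Z -> e z = e w.
Proof. intros H; unfold e; destruct (Z.eq_dec z 0), (Z.eq_dec w 0); auto; lia. Qed.

Lemma D_eval N fs s S : SR N (fun q => ind (pathok N q fs s) * e (2 * q + 1 + S)) = IZR (DZ N fs s S).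
Proof.
  unfold DZ. destruct (Z.odd S) eqn:E.
  - apply Z.odd_spec in E. destruct E as [t Ht].
    assert (Hd : ((S + 1) / 2 = t + 1)%Z).
    { rewrite Ht. replace (2 * t + 1 + 1)%Z with ((t + 1) * 2)%Z by ring. apply Z.div_mul. lia. }
    rewrite Hd.
    rewrite (SR_ext _ _ (fun q => e (q - (- (t + 1))) * ind (pathok N q fs s))).
    2:{ intros q. rewrite (e_eq2 (2 * q + 1 + S) (q - - (t + 1))) by lia. ring. }
    rewrite SR_delta, <- ind_and, pathok_bounds. unfold ind.
    destruct ((lo N fs s <=? - (t + 1)) && (- (t + 1) <? hi N fs s))%Z; auto.
  - assert (E' : Z.even S = true) by (rewrite <- Z.negb_odd, E; auto).
    apply Z.even_spec in E'. destruct E' as [t Ht].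
    rewrite (SR_ext _ _ (fun _ => 0)). apply sumz_zero.
    intros q. unfold e. destruct (Z.eq_dec (2 * q + 1 + S) 0); [lia| ring].
Qed.

Lemma term_eval N fs s d : SR N (fun q => ind (pathok N q fs s) * m d (q + tot fs s)%Z q) = /4 * IZR (Cz N fs d s).
Proof.
  set (T := tot fs s).
  rewrite (SR_ext _ _ (fun q => /4 * ((e (T + d) + e (T - d)) * ind (pathok N q fs s)
     - ind (pathok N q fs s) * e (2 * q + 1 + (T + d)) - ind (pathok N q fs s) * e (2 * q + 1 + (T - d))))).
  2:{ intros q. unfold m.
      rewrite (e_eq (q + T - q + d) (T + d)) by lia. rewrite (e_eq (q + T - q - d) (T - d)) by lia.
      rewrite (e_eq (q + T + q + 1 + d) (2 * q + 1 + (T + d))) by lia.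
      rewrite (e_eq (q + T + q + 1 - d) (2 * q + 1 + (T - d))) by lia. ring. }
  unfold SR. rewrite sumz_scal, !sumz_minus, sumz_scal. fold (SR N (fun q => ind (pathok N q fs s))).
  fold (SR N (fun q => ind (pathok N q fs s) * e (2 * q + 1 + (T + d)))).
  fold (SR N (fun q => ind (pathok N q fs s) * e (2 * q + 1 + (T - d)))).
  rewrite cnt_eval, !D_eval, !e_IZR. unfold Cz. fold T.
  rewrite !minus_IZR, mult_IZR, plus_IZR. ring.
Qed.

Theorem PiC_formula N fs d : PiC N fs d = IZR (zsum (map (Cz N fs d) (signs (length fs)))) / (4 * 2 ^ length fs).
Proof.
  unfold PiC. rewrite (SR_ext _ _ (fun q => (/2) ^ length fs * lsum (map (fun s => ind (pathok N q fs s) * m d (q + tot fs s)%Z q) (signs (length fs))))).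
  2:{ intros q. apply chain_exp. }
  unfold SR. rewrite sumz_scal. fold (SR N (fun q => lsum (map (fun s => ind (pathok N q fs s) * m d (q + tot fs s)%Z q) (signs (length fs))))).
  rewrite (SR_lsum N (fun s q => ind (pathok N q fs s) * m d (q + tot fs s)%Z q)).
  rewrite (lsum_map_ext _ (fun s => /4 * IZR (Cz N fs d s))) by (intros; apply term_eval).
  rewrite lsum_map_scal, lsum_IZR. rewrite pow_inv. field. apply pow_nonzero. lra.
Qed.


Definition epsZ (N : nat) (a : Z) : Z :=
  if ((1 <=? a) && (a <=? 2 * Z.of_nat N - 1) && Z.odd a)%Z then 1%Z else 0%Z.
Lemma eps_IZR N a : eps N a = IZR (epsZ N a).
Proof. unfold eps, epsZ. destruct (_ && _)%bool; auto. Qed.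

Lemma conclude (X Y : Z) (c r : R) : X = Y -> IZR Y / c = r -> IZR X / c = r.
Proof. intros ->; auto. Qed.

Ltac zl := Z.div_mod_to_equations; lia.

Ltac nomm x := lazymatch x with
  | context [Z.max _ _] => fail | context [Z.min _ _] => fail | context [Z.abs _] => fail | _ => idtac end.

Ltac zstep :=
  match goal with
  | |- context [(?x =? ?y)%Z] => nomm x; nomm y;
      first [ rewrite (proj2 (Z.eqb_eq x y)) by zl | rewrite (proj2 (Z.eqb_neq x y)) by zl
            | destruct (Z.eqb_spec x y) ]
  | |- context [(?x <=? ?y)%Z] => nomm x; nomm y;
      first [ rewrite (proj2 (Z.leb_le x y)) by zl | rewrite (proj2 (Z.leb_gt x y)) by zl
            | destruct (Z.leb_spec x y) ]
  | |- context [(?x <? ?y)%Z] => nomm x; nomm y;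
      first [ rewrite (proj2 (Z.ltb_lt x y)) by zl | rewrite (proj2 (Z.ltb_ge x y)) by zl
            | destruct (Z.ltb_spec x y) ]
  | |- context [Z.max ?x ?y] => nomm x; nomm y;
      first [ rewrite (Z.max_l x y) by zl | rewrite (Z.max_r x y) by zl
            | destruct (Z.le_ge_cases x y); [rewrite (Z.max_r x y) by lia | rewrite (Z.max_l x y) by lia] ]
  | |- context [Z.min ?x ?y] => nomm x; nomm y;
      first [ rewrite (Z.min_l x y) by zl | rewrite (Z.min_r x y) by zl
            | destruct (Z.le_ge_cases x y); [rewrite (Z.min_l x y) by lia | rewrite (Z.min_r x y) by lia] ]
  | |- context [Z.abs ?x] => nomm x;
      first [ rewrite (Z.abs_eq x) by zl | rewrite (Z.abs_neq x) by zl
            | destruct (Z.le_ge_cases 0 x); [rewrite (Z.abs_eq x) by lia | rewrite (Z.abs_neq x) by lia] ]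
  end; cbn [andb orb].

Ltac zeqstep :=
  match goal with
  | |- context [(?x =? ?y)%Z] =>
      first [ rewrite (proj2 (Z.eqb_eq x y)) by zl | rewrite (proj2 (Z.eqb_neq x y)) by zl
            | destruct (Z.eqb_spec x y) ]
  end; cbn iota.

Ltac znorm := rewrite ?Z.add_0_l, ?Z.add_0_r, ?Z.mul_0_l, ?Z.mul_0_r, ?Z.mul_1_l, ?Z.sub_0_r.

Ltac zcrunch :=
  unfold Cz, DZ, cntZ, lo, hi, ez, zsum, epsZ, alpha; unfold zpos;
  cbn [tot minP maxP sg map signs app fold_right length andb orb];
  rewrite ?Zodd_mod;
  repeat zeqstep; znorm;
  repeat zstep; zl.

Lemma claim_Pi1_0 N : (1 <= N)%nat -> Pi1 N 0 = INR N.
Proof.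
  intros HN. rewrite Pi1_eq, Pi1_C, PiC_formula by auto. rewrite INR_IZR_INZ.
  apply (conclude _ (4 * Z.of_nat N)%Z).
  - zcrunch.
  - rewrite mult_IZR. simpl. field.
Qed.

Ltac rfin := rewrite ?eps_IZR; repeat first [rewrite mult_IZR | rewrite plus_IZR | rewrite opp_IZR | rewrite minus_IZR]; simpl pow; field.

Lemma claim_Pi2_00 N : (1 <= N)%nat -> Pi2 N 0 0 = INR N.
Proof.
  intros HN. rewrite Pi2_eq, Pi2_C, PiC_formula by auto. rewrite INR_IZR_INZ.
  apply (conclude _ (8 * Z.of_nat N)%Z). - zcrunch. - rfin.
Qed.

Lemma claim_C1 N k : (1 <= N)%nat -> (1 <= k)%Z -> Pi1 N k = - eps N k / 2.
Proof.
  intros HN Hk. rewrite Pi1_eq, Pi1_C, PiC_formula by auto.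
  apply (conclude _ (-2 * epsZ N k)%Z). - zcrunch. - rfin.
Qed.

Lemma claim_C2 N k : (1 <= N)%nat -> (1 <= k)%Z -> Pi2 N k k = IZR (zpos (2 * Z.of_nat N - k)) / 4.
Proof.
  intros HN Hk. rewrite Pi2_eq, Pi2_C, PiC_formula by auto.
  apply (conclude _ (2 * zpos (2 * Z.of_nat N - k))%Z). - zcrunch. - rfin.
Qed.

Lemma claim_C3 N k l : (1 <= N)%nat -> (1 <= k)%Z -> (1 <= l)%Z -> k <> l -> Pi2 N k l = - eps N (k + l) / 2.
Proof.
  intros HN Hk Hl Hkl. rewrite Pi2_eq, Pi2_C, PiC_formula by auto.
  apply (conclude _ (-4 * epsZ N (k + l))%Z). - zcrunch. - rfin.
Qed.

Lemma claim_C4 N k : (1 <= N)%nat -> (1 <= k)%Z -> Pi2 N 0 k = - eps N k / 2.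
Proof.
  intros HN Hk. rewrite Pi2_eq, Pi2_C, PiC_formula by auto.
  apply (conclude _ (-4 * epsZ N k)%Z). - zcrunch. - rfin.
Qed.


Lemma claim_C5 N l : (1 <= N)%nat -> (1 <= l)%Z -> Pi3 N (2 * l) l l = IZR (zpos (2 * Z.of_nat N - 2 * l)) / 8.
Proof.
  intros HN Hl. rewrite Pi3_eq, Pi3_C, PiC_formula by auto.
  apply (conclude _ (2 * zpos (2 * Z.of_nat N - 2 * l))%Z). - zcrunch. - rfin.
Qed.

Lemma claim_C6 N k l : (1 <= N)%nat -> (1 <= k)%Z -> (1 <= l)%Z -> k <> (2 * l)%Z -> Pi3 N k l l =
       - (3 * eps N (k + 2 * l) + eps N k * eps N (Z.abs (2 * l - k))) / 8.
Proof.
  intros HN Hk Hl Hkl. rewrite Pi3_eq, Pi3_C, PiC_formula by auto.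
  apply (conclude _ (-2 * (3 * epsZ N (k + 2 * l) + epsZ N k * epsZ N (Z.abs (2 * l - k))))%Z). - zcrunch. - rfin.
Qed.

Lemma claim_C7 N k l : (1 <= N)%nat -> (1 <= k)%Z -> (1 <= l)%Z -> Pi3 N k l (k + l) =
  IZR (zpos (Z.of_nat N - k - l)) / 4
       + IZR (alpha N (k + l) l (k + l) + alpha N (k + l) k (k + l)) / 8.
Proof.
  intros HN Hk Hl. rewrite Pi3_eq, Pi3_C, PiC_formula by auto.
  apply (conclude _ (4 * zpos (Z.of_nat N - k - l) + 2 * (alpha N (k + l) l (k + l) + alpha N (k + l) k (k + l)))%Z). - zcrunch. - rfin.
Qed.

Lemma claim_C8 N k : (1 <= N)%nat -> (1 <= k)%Z -> Pi3 N 0 k k = IZR (zpos (2 * Z.of_nat N - k)) / 4.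
Proof.
  intros HN Hk. rewrite Pi3_eq, Pi3_C, PiC_formula by auto.
  apply (conclude _ (4 * zpos (2 * Z.of_nat N - k))%Z). - zcrunch. - rfin.
Qed.







Lemma claim_C9 N k : (1 <= N)%nat -> (1 <= k)%Z -> Pi4 N k k k k = IZR (zpos (Z.of_nat N - k)) / 4 + IZR (zpos (2 * Z.of_nat N - k)) / 16.
Proof.
  intros HN Hk. rewrite Pi4_eq, Pi4_C, PiC_formula by auto.
  apply (conclude _ (8 * zpos (Z.of_nat N - k) + 2 * zpos (2 * Z.of_nat N - k))%Z). - zcrunch. - rfin.
Qed.

Lemma claim_C10 N k l : (1 <= N)%nat -> (1 <= k)%Z -> (1 <= l)%Z -> k <> l ->
      Pi4 N k k l l =
        IZR (zpos (Z.of_nat N - Z.max k l) + zpos (Z.of_nat N - k - l)) / 8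
        + IZR (alpha N (Z.min k l) (Z.max k l) (Z.max k l)) / 16
        + IZR (alpha N (k + l) l (k + l) + alpha N (k + l) k (k + l)
               + alpha N l (l - k) l + alpha N k (k - l) k) / 16.
Proof.
  intros HN Hk Hl Hkl. rewrite Pi4_eq, Pi4_C, PiC_formula by auto.
  apply (conclude _ (4 * (zpos (Z.of_nat N - Z.max k l) + zpos (Z.of_nat N - k - l))
     + 2 * alpha N (Z.min k l) (Z.max k l) (Z.max k l)
     + 2 * (alpha N (k + l) l (k + l) + alpha N (k + l) k (k + l)
               + alpha N l (l - k) l + alpha N k (k - l) k))%Z). - zcrunch. - rfin.
Qed.

Lemma claim_C11 N k l : (1 <= N)%nat -> (1 <= k)%Z -> (1 <= l)%Z -> k <> l ->
      Pi4 N k l k l =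
        IZR (zpos (Z.of_nat N - k - l)) / 4
        + IZR (alpha N (k + l) (Z.min k l) (k + l)) / 4
        + IZR (alpha N k k (k + l) + alpha N l l (k + l)) / 8.
Proof.
  intros HN Hk Hl Hkl. rewrite Pi4_eq, Pi4_C, PiC_formula by auto.
  apply (conclude _ (8 * zpos (Z.of_nat N - k - l) + 8 * alpha N (k + l) (Z.min k l) (k + l)
     + 4 * (alpha N k k (k + l) + alpha N l l (k + l)))%Z). - zcrunch. - rfin.
Qed.


Theorem lemma5 (N : nat) (HN : (1 <= N)%nat) :
  Pi1 N 0 = INR N /\ Pi2 N 0 0 = INR N /\
  forall k l : Z, (1 <= k)%Z -> (1 <= l)%Z ->
    let n := Z.of_nat N in
    Pi1 N k = - eps N k / 2 /\
    (k = l -> Pi2 N k l = IZR (zpos (2 * n - k)) / 4) /\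
    (k <> l -> Pi2 N k l = - eps N (k + l) / 2) /\
    Pi2 N 0 k = - eps N k / 2 /\
    (k = (2 * l)%Z -> Pi3 N k l l = IZR (zpos (2 * n - k)) / 8) /\
    (k <> (2 * l)%Z -> Pi3 N k l l =
       - (3 * eps N (k + 2 * l) + eps N k * eps N (Z.abs (2 * l - k))) / 8) /\
    Pi3 N k l (k + l) = IZR (zpos (n - k - l)) / 4
       + IZR (alpha N (k + l) l (k + l) + alpha N (k + l) k (k + l)) / 8 /\
    Pi3 N 0 k k = IZR (zpos (2 * n - k)) / 4 /\
    Pi4 N k k k k = IZR (zpos (n - k)) / 4 + IZR (zpos (2 * n - k)) / 16 /\
    (k <> l ->
      Pi4 N k k l l =
        IZR (zpos (n - Z.max k l) + zpos (n - k - l)) / 8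
        + IZR (alpha N (Z.min k l) (Z.max k l) (Z.max k l)) / 16
        + IZR (alpha N (k + l) l (k + l) + alpha N (k + l) k (k + l)
               + alpha N l (l - k) l + alpha N k (k - l) k) / 16) /\
    (k <> l ->
      Pi4 N k l k l =
        IZR (zpos (n - k - l)) / 4
        + IZR (alpha N (k + l) (Z.min k l) (k + l)) / 4
        + IZR (alpha N k k (k + l) + alpha N l l (k + l)) / 8).
Proof.
  split; [apply claim_Pi1_0; auto|].
  split; [apply claim_Pi2_00; auto|].
  intros k l Hk Hl. cbv zeta.
  split; [apply claim_C1; auto|].
  split; [intros <-; apply claim_C2; auto|].
  split; [intros H; apply claim_C3; auto|].
  split; [apply claim_C4; auto|].
  split; [intros ->; apply claim_C5; auto|].
  split; [intros H; apply claim_C6; auto|].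
  split; [apply claim_C7; auto|].
  split; [apply claim_C8; auto|].
  split; [apply claim_C9; auto|].
  split; [intros H; apply claim_C10; auto|].
  intros H; apply claim_C11; auto.
Qed.
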